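(* For $n\ge 1$, let $N(n)$ be the number of words $u\in\{0,1\}^*$ that begin and end with $1$ (the word $u=1$ is allowed), contain exactly $n$ occurrences of $1$, and are such that the configuration $0u0$ can be reduced to a single peg. Then \[ N(n)=\begin{cases}1 & n=1,\\ 1 & n=2,\\ 2 & n=3,\\ n^2-7n+15 & n\ge 4,\ n \text{ even},\\ n^2-7n+16 & n\ge 5,\ n\text{ odd}.\end{cases} \]
   Context: One-dimensional Peg Solitaire: a configuration is a finite word $w=c_0c_1\cdots c_{n-1}\in\{0,1\}^*$, describing a row of $n$ consecutive sites, where $c_i=1$ means site $i$ holds a peg and $c_i=0$ means site $i$ is a hole. The board consists exactly of these sites (no sites outside the word may be used). A move (hop) takes three consecutive sites $i,i+1,i+2$ within the board such that one end site and the middle site hold pegs and the other end site is a hole, moves the end peg to the hole, and removes the middle peg (i.e. $110\to001$ or $011\to100$). A configuration can be reduced to a single peg if some sequence of hops leads to a configuration with exactly one peg. *)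

(* Defs.v *)
From Stdlib Require Import Relations.
From mathcomp Require Import all_boot all_order all_algebra.
Set Implicit Arguments. Unset Strict Implicit. Unset Printing Implicit Defensive.

(* Configurations: words over {0,1}, encoded as seq bool (true = peg = 1). *)

(* One hop inside the board: 110 -> 001 or 011 -> 100 on three consecutive
   sites of the word; the board is exactly the sites of the word. *)
Definition hop (w w' : seq bool) : Prop :=
  exists a b : seq bool,
    (w = a ++ [:: true; true; false] ++ b /\ w' = a ++ [:: false; false; true] ++ b)
    \/ (w = a ++ [:: false; true; true] ++ b /\ w' = a ++ [:: true; false; false] ++ b).

Definition reducible_to_one (w : seq bool) : Prop :=
  exists w', clos_refl_trans (seq bool) hop w w' /\ count id w' = 1%N.

Definition counted (n : nat) (u : seq bool) : Prop :=
  head false u = true /\ last false u = true /\ count id u = n /\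
  reducible_to_one (false :: u ++ [:: false]).

Definition N_value (n : nat) : int :=
  if n == 1%N then 1%R
  else if n == 2%N then 1%R
  else if n == 3%N then 2%R
  else if ~~ odd n then ((n%:Z) ^+ 2 - 7 * n%:Z + 15)%R
  else ((n%:Z) ^+ 2 - 7 * n%:Z + 16)%R.

(* Main.v *)
Require Import Defs.
From Stdlib Require Import Relations.
From mathcomp Require Import all_boot all_order all_algebra zify.
Set Implicit Arguments. Unset Strict Implicit. Unset Printing Implicit Defensive.

Definition row0 := [:: 1; 1; 3; 6; 3; 4; 6; 10; 4; 11; 12; 12; 12; 7; 10; 12; 11; 14].
Definition row1 := [:: 2; 4; 5; 7; 8; 9; 12; 3; 9; 13; 14; 15; 12; 16; 6; 10; 17; 16].
Definition dl (q : nat) (c : bool) : nat := nth 12 (if c then row1 else row0) q.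
Definition accb (q : nat) : bool := q \in [:: 2; 3; 4; 6; 8].
Definition run (q : nat) (w : seq bool) := foldl dl q w.

Lemma dl_big q c : 18 <= q -> dl q c = 12.
Proof. by move=> h; rewrite /dl nth_default //; case: c. Qed.

Lemma run_cat q a b : run q (a ++ b) = run (run q a) b.
Proof. by rewrite /run foldl_cat. Qed.

Lemma run_cons q c w : run q (c :: w) = run (dl q c) w.
Proof. by []. Qed.

Definition simlist : seq (nat * nat) := [:: (0,0); (0,1); (1,1); (2,2); (2,4); (3,3); (4,4); (5,5); (5,8); (6,2); (6,3); (6,4); (6,6); (6,8); (7,7); (8,8); (9,9); (10,1); (10,3); (10,10); (11,3); (11,11); (12,0); (12,1); (12,2); (12,3); (12,4); (12,5); (12,6); (12,7); (12,8); (12,9); (12,10); (12,11); (12,12); (12,13); (12,14); (12,15); (12,16); (12,17); (13,13); (14,0); (14,1); (14,4); (14,7); (14,14); (15,7); (15,15); (16,2); (16,4); (16,9); (16,16); (17,0); (17,1); (17,5); (17,8); (17,13); (17,17)].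
Definition simb p q := (p, q) \in simlist.

Lemma simcheck : all (fun pq => (accb pq.1 ==> accb pq.2) &&
   simb (dl pq.1 false) (dl pq.2 false) && simb (dl pq.1 true) (dl pq.2 true)) simlist.
Proof. by vm_compute. Qed.

Lemma sim_run b p q : simb p q -> accb (run p b) -> accb (run q b).
Proof.
elim: b p q => [|c b IH] p q hs /=.
  by have /allP /(_ _ hs) /= /andP [/andP [/implyP h _] _] := simcheck.
have /allP /(_ _ hs) /= /andP [/andP [_ h0] h1] := simcheck.
by apply: IH; case: c.
Qed.

Definition closq q := simb (run q [:: false; false; true]) (run q [:: true; true; false]) &&
  simb (run q [:: true; false; false]) (run q [:: false; true; true]).

Lemma closq_all q : closq q.
Proof.
case: (ltnP q 18) => h.
  have : all closq (iota 0 18) by vm_compute.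
  by move/allP; apply; rewrite mem_iota.
by rewrite /closq /run /= (dl_big false h) (dl_big true h).
Qed.

Lemma hop_back w w' : hop w w' -> accb (run 0 w') -> accb (run 0 w).
Proof.
case=> a [b [[-> ->]|[-> ->]]]; rewrite !run_cat; apply: sim_run;
 by have /andP [h1 h2] := closq_all (run 0 a).
Qed.

Lemma zeros01 w q : (q == 0) || (q == 1) -> count id w = 0 -> (run q w == 0) || (run q w == 1).
Proof.
elim: w q => [|c w IH] q hq //=; case: c => //= h.
by apply: IH h; case/orP: hq => /eqP ->.
Qed.

Lemma zerosacc w q : q \in [:: 2;3;4;6] -> count id w = 0 -> run q w \in [:: 2;3;4;6].
Proof.
elim: w q => [|[] w IH] q //= hq h; apply: IH => //.
by move: hq; rewrite !inE => /or4P [] /eqP ->.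
Qed.

Lemma one_acc w q : (q == 0) || (q == 1) -> count id w = 1 -> accb (run q w).
Proof.
elim: w q => [|c w IH] q //= hq; case: c => /= h.
  have hw : count id w = 0 by case: h.
  have : run (dl q true) w \in [:: 2;3;4;6].
    by apply: zerosacc=> //; move: hq => /orP [] /eqP ->.
  by rewrite /accb !inE => /or4P [] /eqP ->.
by apply: IH => //; move: hq => /orP [] /eqP ->.
Qed.

Lemma reducible_acc w : reducible_to_one w -> accb (run 0 w).
Proof.
case=> w' [hr hc].
have : accb (run 0 w') by apply: one_acc.
elim: hr {hc} => [x y hxy|x|x y z _ IH1 _ IH2] h.
- exact: hop_back hxy h.
- exact h.
- exact: IH1 (IH2 h).
Qed.

Definition nstate := (nat * nat)%type.

Definition succ (p : nstate) (c : bool) : seq nstate :=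
  let: (t, q) := p in
  match t with
  | 0 => [:: (0, dl q c)]
  | 1 => if c then [:: (2, dl q false)] else [::]
  | 2 => if c then [::] else [:: (0, dl q true)]
  | 3 => if c then [:: (4, dl q false)] else [::]
  | 4 => if c then [:: (0, dl q false)] else [::]
  | _ => [::]
  end.

Definition start (q : nat) (c : bool) : seq nstate :=
  if c then [:: (1, dl q false)] else [:: (3, dl q true)].

Definition allns : seq nstate := [seq (t, q) | t <- iota 0 5, q <- iota 0 18].

Definition canon (raw : seq nstate) := [seq p <- allns | p \in raw].

Definition dstate := (nat * nat * seq nstate)%type.

Definition Dstep (d : dstate) (c : bool) : dstate :=
  let: (q, n, T) := d in
  (dl q c, minn 2 (n + c), canon (start q c ++ flatten [seq succ p c | p <- T])).

Definition D0 : dstate := (0, 0, [::]).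

Fixpoint explore (fuel : nat) (seen todo : seq dstate) : seq dstate :=
  match fuel with
  | 0 => seen
  | f.+1 => match todo with
            | [::] => seen
            | d :: todo' =>
               let nw := [seq x <- [:: Dstep d false; Dstep d true] | x \notin seen] in
               explore f (nw ++ seen) (nw ++ todo')
            end
  end.

Definition Reach := Eval vm_compute in explore 1000 [:: D0] [:: D0].

Lemma Reach_ok : (D0 \in Reach) && all (fun d => (Dstep d false \in Reach) && (Dstep d true \in Reach)) Reach
  && all (fun d => let: (q, n, T) := d in (accb q && (n == 2)) ==> has (fun p => (p.1 == 0) && accb p.2) T) Reach.
Proof. by vm_compute. Qed.

Definition pat (k : bool) := if k then [:: false; true; true] else [:: true; true; false].
Definition pat' (k : bool) := if k then [:: true; false; false] else [:: false; false; true].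

Definition Sem (x : seq bool) (p : nstate) : Prop :=
  let: (t, q) := p in
  match t with
  | 0 => exists a b k, x = a ++ pat k ++ b /\ run 0 (a ++ pat' k ++ b) = q
  | 1 => exists a, x = rcons a true /\ run 0 (rcons a false) = q
  | 2 => exists a, x = a ++ [:: true; true] /\ run 0 (a ++ [:: false; false]) = q
  | 3 => exists a, x = rcons a false /\ run 0 (rcons a true) = q
  | 4 => exists a, x = a ++ [:: false; true] /\ run 0 (a ++ [:: true; false]) = q
  | _ => False
  end.

Lemma run_rcons q w c : run q (rcons w c) = dl (run q w) c.
Proof. by rewrite /run foldl_rcons. Qed.

Lemma succ_sem x p c s : Sem x p -> s \in succ p c -> Sem (rcons x c) s.
Proof.
case: p => [[|[|[|[|[|t]]]]] q] //=.
- case=> a [b [k [-> <-]]]; rewrite inE => /eqP ->.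
  by exists a, (rcons b c), k; rewrite -!rcons_cat run_rcons.
- case=> a [-> <-]; case: c => //; rewrite inE => /eqP ->.
  by exists a; rewrite -?cats1 -?catA ?run_cat /=.
- case=> a [-> <-]; case: c => //; rewrite inE => /eqP ->.
  exists a, [::], false; rewrite /= ?cats0 -?cats1 -?catA ?run_cat /=.
  by [].
- case=> a [-> <-]; case: c => //; rewrite inE => /eqP ->.
  by exists a; rewrite -?cats1 -?catA ?run_cat /=.
- case=> a [-> <-]; case: c => //; rewrite inE => /eqP ->.
  exists a, [::], true; rewrite /= ?cats0 -?cats1 -?catA ?run_cat /=.
  by [].
Qed.

Lemma start_sem x c s : s \in start (run 0 x) c -> Sem (rcons x c) s.
Proof.
case: c; rewrite /start inE => /eqP -> /=; exists x; by rewrite run_rcons.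
Qed.

Lemma D_fold x : exists T, foldl Dstep D0 x = (run 0 x, minn 2 (count id x), T)
   /\ forall p, p \in T -> Sem x p.
Proof.
elim/last_ind: x => [|x c [T [e hT]]]; first by exists [::].
rewrite foldl_rcons e /=; eexists; split.
  rewrite run_rcons -cats1 count_cat /= addn0; congr (_, _, _); case: c => /=; lia.
move=> p; rewrite mem_filter => /andP [+ _]; rewrite mem_cat => /orP [].
  exact: start_sem.
case/flattenP => s /mapP [p' hp' ->] hs; exact: succ_sem (hT _ hp') hs.
Qed.

Lemma D_reach x : foldl Dstep D0 x \in Reach.
Proof.
have /andP [/andP [h0 h1] _] := Reach_ok.
elim/last_ind: x => [|x c IH] //; rewrite foldl_rcons.
by have /allP /(_ _ IH) /andP [] := h1; case: c.
Qed.

Lemma hop_exists w : accb (run 0 w) -> 2 <= count id w ->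
  exists w', hop w w' /\ accb (run 0 w') /\ count id w' = (count id w).-1.
Proof.
move=> ha hc; have [T [e hT]] := D_fold w.
have := D_reach w; rewrite e => hR.
have /andP [_ /allP /(_ _ hR)] := Reach_ok.
rewrite ha /= (_ : minn 2 (count id w) == 2); last by apply/eqP/minn_idPl.
case/hasP => [[t q] hp /= /andP [/eqP ht hq]]; subst t.
have [a [b [k [ew eq]]]] := hT _ hp.
exists (a ++ pat' k ++ b); split; last split.
- by exists a, b; case: k ew {eq} => ew; [right | left]; split.
- by rewrite eq.
- by rewrite ew !count_cat; case: k {ew eq} => /=; lia.
Qed.

Lemma acc_red w : accb (run 0 w) -> reducible_to_one w.
Proof.
move: {2}(count id w) (erefl (count id w)) => m.
elim: m {-2}m (leqnn m) w => [|M IH] m hm w hc ha.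
  have : count id w = 0 by lia.
  by move/(zeros01 (q:=0) (erefl true)) => /orP [] /eqP h; rewrite h in ha.
case: (ltnP m 2) => h2.
  case: m hm hc h2 => [|[|]] // _ hc _.
    have : count id w = 0 by [].
    by move/(zeros01 (q:=0) (erefl true)) => /orP [] /eqP h; rewrite h in ha.
  by exists w; split => //; apply: rt_refl.
have [w' [hh [ha' hc']]] := hop_exists ha (leq_trans h2 (eq_leq (esym hc))).
have [w'' [hr hc'']] := IH m.-1 ltac:(lia) w' ltac:(lia) ha'.
exists w''; split => //; apply: rt_trans hr; exact: rt_step.
Qed.

Fixpoint words (q m : nat) : seq (seq bool) :=
  match m with
  | 0 => if accb (dl q false) then [:: [::]] else [::]
  | m'.+1 => [seq true :: v | v <- words (dl q true) m']
          ++ [seq [:: false, true & v] | v <- words (dl (dl q false) true) m']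
          ++ [seq [:: false, false, true & v] | v <- words (dl (dl (dl q false) false) true) m']
  end.

Fixpoint cnt (q m : nat) : nat :=
  match m with
  | 0 => accb (dl q false)
  | m'.+1 => cnt (dl q true) m' + cnt (dl (dl q false) true) m'
             + cnt (dl (dl (dl q false) false) true) m'
  end.

Lemma size_words q m : size (words q m) = cnt q m.
Proof.
elim: m q => [|m IH] q /=; first by case: (accb _).
by rewrite !size_cat !size_map !IH addnA.
Qed.

Lemma words_spec q m v : v \in words q m ->
  [/\ count id v = m, last true v = true & accb (dl (run q v) false)].
Proof.
elim: m q v => [|m IH] q v /=.
  by case: ifP => // h; rewrite inE => /eqP ->.
rewrite !mem_cat => /or3P [] /mapP [v' /IH [h1 h2 h3] ->] /=; split => //; lia.
Qed.

Lemma words_uniq q m : uniq (words q m).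
Proof.
elim: m q => [|m IH] q /=; first by case: (accb _).
rewrite !cat_uniq !map_inj_uniq ?IH //=; last by move=> x y [].
  2: by move=> x y [].
  2: by move=> x y [].
rewrite has_cat !negb_or andbT; repeat (apply/andP; split);
 by apply/hasPn => x /mapP [y _ ->]; apply/mapP => [[z _]].
Qed.

Definition Rg := [:: 3; 4; 6; 7; 8; 9; 10; 12; 13; 14; 15; 16; 17].

Lemma Rg_check : all (fun q => [&& dl q true \in Rg, dl (dl q false) true \in Rg,
   dl (dl (dl q false) false) true \in Rg & dl (dl (dl q false) false) false \in [:: 6; 12]]) Rg.
Proof. by vm_compute. Qed.

Lemma Z_run z w : z \in [:: 6; 12] -> run z w \in [:: 6; 12].
Proof.
elim: w z => [|c w IH] z //= hz; apply: IH.
by move: hz; rewrite !inE => /orP [] /eqP ->; case: c.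
Qed.

Lemma words_complete m q v : q \in Rg -> count id v = m -> last true v = true ->
  accb (dl (run q v) false) -> v \in words q m.
Proof.
elim: m q v => [|m IH] q v hq.
  case/lastP: v => [|v x] /=; first by rewrite /=; move=> _ _ ->.
  by rewrite last_rcons -cats1 count_cat /= => hc hx; rewrite hx in hc; lia.
have /allP /(_ _ hq) /and4P [r1 r2 r3 r4] := Rg_check.
case: v => [|[] v] //=.
  move=> [hc] hl ha; rewrite mem_cat; apply/orP; left.
  by apply: map_f; apply: IH.
case: v => [|[] v] //=.
  move=> hc hl ha; rewrite !mem_cat; apply/orP; right; apply/orP; left.
  by apply: map_f; apply: IH => //; case: hc.
case: v => [|[] v] //=.
  move=> hc hl ha; rewrite !mem_cat; apply/orP; right; apply/orP; right.
  by apply: map_f; apply: IH => //; case: hc.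
move=> _; case/lastP: v => [|v x] //=; rewrite last_rcons => -> ha.
have := Z_run v r4; rewrite run_rcons in ha.
by rewrite !inE => /orP [] /eqP h; rewrite h in ha.
Qed.

Definition Inv (k : nat) : Prop :=
  let a := 2 * k + 3 in let b := 2 * k + 4 in
  cnt 3 a = k + 1 /\ cnt 3 b = k + 2 /\
  cnt 4 a = 4 * k * k + 2 * k + 3 /\ cnt 4 b = 4 * k * k + 6 * k + 6 /\
  cnt 6 a = 0 /\ cnt 6 b = 0 /\
  cnt 7 a = k + 2 /\ cnt 7 b = k + 2 /\
  cnt 8 a = 4 * k * k + 5 * k + 4 /\ cnt 8 b = 4 * k * k + 9 * k + 7 /\
  cnt 9 a = 3 * k + 1 /\ cnt 9 b = 3 * k + 4 /\
  cnt 10 a = 1 /\ cnt 10 b = 1 /\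
  cnt 12 a = 0 /\ cnt 12 b = 0 /\
  cnt 13 a = 3 * k + 3 /\ cnt 13 b = 3 * k + 3 /\
  cnt 14 a = 1 /\ cnt 14 b = 1 /\
  cnt 15 a = 1 /\ cnt 15 b = 1 /\
  cnt 16 a = 2 * k + 1 /\ cnt 16 b = 2 * k + 3 /\
  cnt 17 a = 2 * k + 2 /\ cnt 17 b = 2 * k + 2.

Lemma Inv_all k : Inv k.
Proof.
elim: k => [|k IH]; first by rewrite /Inv; vm_compute; repeat split.
move: IH; rewrite /Inv.
have -> : 2 * k.+1 + 3 = (2 * k + 4).+1 by lia.
have -> : 2 * k.+1 + 4 = (2 * k + 4).+2 by lia.
move=> [h1 [h2 [h3 [h4 [h5 [h6 [h7 [h8 [h9 [h10 [h11 [h12 [h13 [h14 [h15 [h16 [h17 [h18 [h19 [h20 [h21 [h22 [h23 [h24 [h25 h26]]]]]]]]]]]]]]]]]]]]]]]]].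
cbn -[addn muln].
rewrite ?h2 ?h4 ?h6 ?h8 ?h10 ?h12 ?h14 ?h16 ?h18 ?h20 ?h22 ?h24 ?h26.
repeat split; nia.
Qed.

Lemma cnt_N n : 1 <= n -> Posz (cnt 4 n.-1) = N_value n.
Proof.
move=> hn.
case: n hn => [|[|[|[|n]]]] // _; try by vm_compute.
have [k [hk|hk]] : exists k, n = 2 * k \/ n = 2 * k + 1.
  by exists (n %/ 2); lia.
- have := Inv_all k; rewrite /Inv => [[_ [_ [h _]]]].
  have -> : n.+4.-1 = 2 * k + 3 by lia.
  rewrite h /N_value hk /=.

  rewrite oddM /=; lia.
have := Inv_all k; rewrite /Inv => [[_ [_ [_ [h _]]]]].
have -> : n.+4.-1 = 2 * k + 4 by lia.
rewrite h /N_value hk /= addn1 /= oddM /=; lia.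
Qed.

Theorem mainTheorem2 (n : nat) (hn : (1 <= n)%N) :
  exists s : seq (seq bool),
    uniq s /\ (forall u : seq bool, u \in s <-> counted n u) /\
    Posz (size s) = N_value n.
Proof.
exists [seq true :: v | v <- words 4 n.-1]; split; last split.
- by rewrite map_inj_uniq ?words_uniq // => x y [].
- move=> u; split.
    case/mapP => v hv ->; have [h1 h2 h3] := words_spec hv.
    split => //; split => //; split; first by rewrite /= h1; lia.
    by apply: acc_red; rewrite /= run_cat.
  case: u => [|[] v] [] //= _ [hl [hc hr]].
  apply: map_f; apply: words_complete => //.
  + by rewrite -hc add1n.
  + by have := reducible_acc hr; rewrite /= run_cat.
- by rewrite size_map size_words cnt_N.
Qed.
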